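(* Let $\Sigma\in\mathbb{R}^{p\times p}$ be positive definite. Then $$\{B\in\mathbb{D}:\ \Sigma=(I-B)^{-T}\Omega(I-B)^{-1}\text{ for some }\Omega\in\mathcal{D}^+\}=\{\tilde B(\pi):\ \pi\text{ a permutation of }[p]\}.$$
   Context: $\mathbb{D}$ is the set of real $p\times p$ matrices whose directed graph (edge $i\to j$ iff $b_{ij}\ne0$) is acyclic. $\mathcal{D}^+$ is the set of $p\times p$ diagonal matrices with positive diagonal entries. For a permutation $\pi$ of $[p]$ and a $p\times p$ matrix $A$, $(P_\pi A)_{ij}=a_{\pi(i)\pi(j)}$. For each $\pi$, write uniquely $P_\pi\Sigma^{-1}=(I-L)D^{-1}(I-L)^T$ with $L$ strictly lower triangular and $D\in\mathcal{D}^+$, and set $\tilde B(\pi)=P_{\pi^{-1}}L$. *)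

(* Defs.v *)
From HB Require Import structures.
From mathcomp Require Import all_boot all_order all_algebra all_fingroup.
Set Implicit Arguments. Unset Strict Implicit. Unset Printing Implicit Defensive.
Import Order.TTheory GRing.Theory Num.Theory.
Local Open Scope ring_scope.

Section Defs.
Variables (R : realFieldType) (p : nat).

Definition mx_graph (B : 'M[R]_p) : rel 'I_p := fun i j => B i j != 0.

(* B \in \mathbb{D}: the directed graph of B is acyclic, i.e. there is no
   edge i -> j with a (possibly trivial) path back from j to i. *)
Definition is_dag_mx (B : 'M[R]_p) : Prop :=
  forall i j : 'I_p, mx_graph B i j -> ~~ connect (mx_graph B) j i.

Definition is_posdiag_mx (D : 'M[R]_p) : Prop :=
  is_diag_mx D /\ forall i : 'I_p, 0 < D i i.

Definition is_posdef_mx (S : 'M[R]_p) : Prop :=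
  S^T = S /\ forall x : 'cV[R]_p, x != 0 -> 0 < (x^T *m S *m x) 0 0.

Definition is_strict_lower_mx (L : 'M[R]_p) : Prop :=
  forall i j : 'I_p, (i <= j)%N -> L i j = 0.

Definition permconj (s : 'S_p) (A : 'M[R]_p) : 'M[R]_p :=
  \matrix_(i, j) A (s i) (s j).

(* B = \tilde B(pi): B = P_{pi^{-1}} L where
   P_pi Sigma^{-1} = (I - L) D^{-1} (I - L)^T with L strictly lower
   triangular and D \in \mathcal{D}^+ (this decomposition is unique). *)
Definition is_Btilde (S : 'M[R]_p) (s : 'S_p) (B : 'M[R]_p) : Prop :=
  exists (L D : 'M[R]_p),
    [/\ is_strict_lower_mx L, is_posdiag_mx D,
        permconj s (invmx S) = (1%:M - L) *m invmx D *m (1%:M - L)^T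
      & B = permconj (s^-1)%g L].

End Defs.

(* Main.v *)
Require Import Defs.
From HB Require Import structures.
From mathcomp Require Import all_boot all_order all_algebra all_fingroup zify.
Import Order.TTheory GRing.Theory Num.Theory.
Local Open Scope ring_scope.
Set Implicit Arguments. Unset Strict Implicit.
Section MA.
Variables (R : realFieldType) (p : nat).
Implicit Types (A B C : 'M[R]_p) (s : 'S_p).

Lemma invmx_uniq A B : A *m B = 1%:M -> invmx A = B.
Proof.
move=> AB; have [Au _] := mulmx1_unit AB.
by rewrite -[invmx A]mulmx1 -AB mulmxA mulVmx // mul1mx.
Qed.

Lemma invmxM A B : A \in unitmx -> B \in unitmx ->
  invmx (A *m B) = invmx B *m invmx A.
Proof.
move=> Au Bu; apply: invmx_uniq.
by rewrite mulmxA -(mulmxA A) mulmxV // mulmx1 mulmxV.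
Qed.

Lemma permconjE s A : permconj s A = perm_mx s *m A *m (perm_mx s)^T.
Proof.
rewrite tr_perm_mx -col_permE -row_permE.
by apply/matrixP=> i j; rewrite !mxE.
Qed.

Lemma permPT s : (perm_mx s)^T *m perm_mx s = 1%:M :> 'M[R]_p.
Proof. by rewrite tr_perm_mx -perm_mxM mulVg perm_mx1. Qed.

Lemma permconjM s A B : permconj s (A *m B) = permconj s A *m permconj s B.
Proof.
rewrite !permconjE !mulmxA; congr (_ *m _).
by rewrite -(mulmxA _ _ (perm_mx s)) permPT mulmx1.
Qed.

Lemma permconjT s A : permconj s A^T = (permconj s A)^T.
Proof. by apply/matrixP=> i j; rewrite !mxE. Qed.

Lemma permconj1 s : permconj s 1%:M = 1%:M :> 'M[R]_p.
Proof. by rewrite permconjE mulmx1 tr_perm_mx -perm_mxM mulgV perm_mx1. Qed.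

Lemma permconjB s A B : permconj s (A - B) = permconj s A - permconj s B.
Proof. by apply/matrixP=> i j; rewrite !mxE. Qed.

Lemma permconjK s A : permconj s^-1 (permconj s A) = A.
Proof. by apply/matrixP=> i j; rewrite !mxE !permKV. Qed.

Lemma permconjKV s A : permconj s (permconj s^-1 A) = A.
Proof. by apply/matrixP=> i j; rewrite !mxE !permK. Qed.

Lemma permconj_unit s A : (permconj s A \in unitmx) = (A \in unitmx).
Proof. by rewrite permconjE !unitmx_mul unitmx_tr unitmx_perm /= andbT. Qed.

Lemma permconjV s A : permconj s (invmx A) = invmx (permconj s A).
Proof.
have [Au|Anu] := boolP (A \in unitmx).
  by symmetry; apply: invmx_uniq; rewrite -permconjM mulmxV // permconj1.
rewrite !invmx_out //; by rewrite inE /= ?permconj_unit.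
Qed.

End MA.
Section MB.
Variables (R : realFieldType) (p : nat).
Implicit Types (S A B C L D : 'M[R]_p) (s : 'S_p).

Lemma strict_lower_unit L : is_strict_lower_mx L -> (1%:M - L) \in unitmx.
Proof.
move=> HL; rewrite unitmxE det_trig; last first.
  apply/is_trig_mxP=> i j lij; rewrite !mxE HL ?(ltnW lij) //.
  by rewrite eqE /= ltn_eqF // subr0.
rewrite (eq_bigr (fun=> 1)) ?prodr_const ?expr1n ?unitr1 // => i _.
by rewrite !mxE eqxx HL // subr0.
Qed.

Lemma posdiag_unit D : is_posdiag_mx D -> D \in unitmx.
Proof.
move=> [Hd Hp]; rewrite unitmxE det_trig ?is_diag_mx_is_trig // unitfE.
by apply/prodf_neq0=> i _; rewrite gt_eqF.
Qed.

Lemma permconj_posdiag s D : is_posdiag_mx D -> is_posdiag_mx (permconj s D).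
Proof.
move=> [/is_diag_mxP Hd Hp]; split; last by move=> i; rewrite mxE.
apply/is_diag_mxP=> i j ij; rewrite mxE Hd //.
apply: contra ij => /eqP/val_inj/perm_inj ->; by [].
Qed.

Lemma posdef_unit S : is_posdef_mx S -> S \in unitmx.
Proof.
move=> [ST Hpos]; have [//|Snu] := boolP (S \in unitmx); exfalso.
have: kermx S != 0 by rewrite kermx_eq0 row_free_unit.
case/matrix0Pn=> i [j /negbTE Hij].
pose y := row i (kermx S).
have yS : y *m S = 0 by rewrite /y -row_mul mulmx_ker row0.
have yn0 : y^T != 0.
  apply/negP=> /eqP/matrixP/(_ j 0); rewrite [LHS]mxE [LHS]mxE [RHS]mxE => H0.
  by rewrite H0 eqxx in Hij.
have := Hpos _ yn0; rewrite trmxK yS mul0mx mxE ltxx //.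
Qed.

End MB.
Section MC.
Variables (R : realFieldType) (p : nat).
Implicit Types (S A B C L D : 'M[R]_p) (s : 'S_p).

Lemma path_dec (e : rel 'I_p) (f : 'I_p -> nat) :
  (forall x y, e x y -> (f y < f x)%N) ->
  forall x y, connect e x y -> (f y <= f x)%N.
Proof.
move=> He x y /connectP [q pq ->] {y}; elim: q x pq => [|z q IH] x //=.
move=> /andP [exz pq]; exact: leq_trans (IH _ pq) (ltnW (He _ _ exz)).
Qed.

Lemma dag_of_lower s L : is_strict_lower_mx L -> is_dag_mx (permconj s^-1 L).
Proof.
move=> HL.
have He : forall x y, mx_graph (permconj s^-1 L) x y -> (s^-1%g y < s^-1%g x)%N.
  move=> x y; rewrite /mx_graph mxE; apply: contraR; rewrite -leqNgt => H.
  by rewrite HL.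
move=> i j eij; apply/negP=> cji.
have := path_dec He cji; have := He _ _ eij; lia.
Qed.

Lemma topo B : is_dag_mx B ->
  exists s : 'S_p, forall i j, B (s i) (s j) != 0 -> (j < i)%N.
Proof.
move=> Hd.
pose e := mx_graph B.
pose h v := #|[set w | connect e v w]|.
have Hh : forall v w, e v w -> (h w < h v)%N.
  move=> v w evw; apply: proper_card; apply/properP; split.
    apply/subsetP=> x; rewrite !inE => cwx.
    exact: connect_trans (connect1 evw) cwx.
  exists v; rewrite !inE ?connect0 //; exact: Hd.
pose key (v : 'I_p) := (h v * p + v)%N.
have Hk : forall v w, e v w -> (key w < key v)%N.
  move=> v w /Hh; rewrite /key; have := ltn_ord v; have := ltn_ord w; nia.
have kinj : forall u v, key u = key v -> u = v.
  move=> u v; rewrite /key => E; apply: val_inj => /=.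
  have := ltn_ord v; have := ltn_ord u => lu lv.
  case: (ltngtP (h u) (h v)) => c; first nia; first nia.
  by move: E; rewrite c => /addnI.
pose t v := #|[set u | (key u < key v)%N]|.
have tlt : forall v, (t v < p)%N.
  move=> v; rewrite -[X in (_ < X)%N]card_ord; apply: proper_card.
  apply/properP; split; first by apply/subsetP.
  by exists v; rewrite ?inE ?ltnn.
have tmono : forall u v, (key u < key v)%N -> (t u < t v)%N.
  move=> u v kuv; apply: proper_card; apply/properP; split.
    by apply/subsetP=> x; rewrite !inE => /ltn_trans; apply.
  by exists u; rewrite !inE ?ltnn.
pose tf v := Ordinal (tlt v).
have tf_inj : injective tf.
  move=> u v /(congr1 val) /= E; apply: kinj.
  case: (ltngtP (key u) (key v)) => // /tmono; rewrite E ltnn //.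
exists (perm tf_inj)^-1%g => i j.
move=> /(Hk _ _) /tmono.
have ti : forall k, t ((perm tf_inj)^-1%g k) = k.
  by move=> k; have := permKV (perm tf_inj) k; rewrite permE => /(congr1 val).
by rewrite !ti.
Qed.

End MC.
Theorem lemma1 (R : realFieldType) (p : nat) (S : 'M[R]_p) :
  is_posdef_mx S ->
  forall B : 'M[R]_p,
    (is_dag_mx B /\
     exists Om : 'M[R]_p, is_posdiag_mx Om /\
       S = (invmx (1%:M - B))^T *m Om *m invmx (1%:M - B))
    <-> (exists s : 'S_p, is_Btilde S s B).
Proof.
move=> HS B; split.
  move=> [Hd [Om [HOm ->]]].
  have [s Hs] := topo Hd.
  pose L := permconj s B.
  have HL : is_strict_lower_mx L.
    move=> i j lij; rewrite mxE; apply/eqP; apply: contraLR lij => /Hs.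
    by rewrite -ltnNge.
  have EB : 1%:M - B = permconj s^-1 (1%:M - L).
    by rewrite permconjB permconj1 permconjK.
  have Bu : 1%:M - B \in unitmx by rewrite EB permconj_unit strict_lower_unit.
  have Xu : invmx (1%:M - B) \in unitmx by rewrite unitmx_inv.
  have Omu := posdiag_unit HOm.
  exists s, L, (permconj s Om); split => //.
  - exact: permconj_posdiag.
  - rewrite invmxM ?unitmx_mul ?unitmx_tr ?Xu ?Omu // invmxM ?unitmx_tr //.
    rewrite -trmx_inv invmxK !permconjM permconjV permconjT permconjB permconj1.
    by rewrite mulmxA.
  - by rewrite permconjK.
move=> [s [L [D [HL HD HE ->]]]].
split; first exact: dag_of_lower.
pose M := 1%:M - permconj s^-1 L.
have EM : M = permconj s^-1 (1%:M - L) by rewrite permconjB permconj1.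
have Mu : M \in unitmx by rewrite EM permconj_unit strict_lower_unit.
have HOm := permconj_posdiag s^-1 HD.
have Omu := posdiag_unit HOm.
exists (permconj s^-1 D); split => //.
have : permconj s^-1 (permconj s (invmx S)) = permconj s^-1 ((1%:M - L) *m invmx D *m (1%:M - L)^T)
  by rewrite HE.
rewrite permconjK !permconjM permconjT permconjV -EM => HV.
rewrite -[LHS](invmxK S) HV -/M.
rewrite invmxM ?unitmx_mul ?unitmx_tr ?unitmx_inv ?Mu ?Omu // invmxM ?unitmx_inv //.
by rewrite invmxK -trmx_inv mulmxA.
Qed.
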